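(* Let $\mathcal{G}$ be a connected, homogeneous, bidirected coupled cell network with cell set $\mathcal{C}=\{1,\dots,n\}$ and edge set $\mathcal{E}$, each cell having phase space $\mathbb{R}$. Let $f:\mathbb{R}^n\to\mathbb{R}^n$ be the $\mathcal{G}$-admissible vector field with components \[ f_c(x)=\sum_{d\in I(c)}\phi_{[(c,d)]}(x_d-x_c),\qquad c\in\mathcal{C}, \] where for each edge type $\xi$, $\phi_\xi:\mathbb{R}\to\mathbb{R}$ is an odd $C^1$ function. Suppose there exists $\varepsilon>0$ such that $\alpha\,\phi_\xi(\alpha)>0$ for all $\alpha\in(-\varepsilon,\varepsilon)\setminus\{0\}$ and all edge types $\xi$. Let $\Delta=\{x\in\mathbb{R}^n: x_1=\dots=x_n\}$ be the total synchrony subspace and let $\Omega=\{x\in\mathbb{R}^n:\operatorname{dist}(x,\Delta)<r\}$ be the largest open hypercylinder around $\Delta$ such that $x\in\Omega$ implies $|x_d-x_c|<\varepsilon$ for all $(c,d)\in\mathcal{E}$. Then, for the system $\dot x=f(x)$, the total synchrony subspace $\Delta$ (which consists of equilibria) is asymptotically stable on $\Omega$ in the sense of Lyapunov.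
   Context: A coupled cell network consists of cells $\mathcal{C}=\{1,\dots,n\}$, edges $\mathcal{E}\subset\mathcal{C}\times\mathcal{C}$ without loops, and an equivalence relation on edges (edge types; $[e]$ is the type of $e$) compatible with an equivalence relation on cells. The input set of $c$ is the set of edges $(d,c)\in\mathcal{E}$; one writes $d\in I(c)$ when $(d,c)\in\mathcal{E}$. Cells $c,d$ are input equivalent if there is an edge-type preserving bijection between their input sets; the network is homogeneous if all cells are input equivalent. It is bidirected if $(i,j)\in\mathcal{E}$ iff $(j,i)\in\mathcal{E}$, with $(i,j)$ and $(j,i)$ of the same type. Connected means the underlying graph is connected. Admissible maps have components depending only on the cell's own variable and its inputs, with identical functional form across input-equivalent cells, edges of the same type being treated identically. *)

(* Defs.v *)
From HB Require Import structures.
From mathcomp Require Import all_boot all_order all_algebra.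
From mathcomp Require Import all_classical all_reals all_analysis.
Set Implicit Arguments. Unset Strict Implicit. Unset Printing Implicit Defensive.
Import Order.TTheory GRing.Theory Num.Theory.
Import numFieldNormedType.Exports.
Local Open Scope classical_set_scope.
Local Open Scope ring_scope.

(* E d c  <=> (d, c) is an edge, i.e. d is an input of cell c  (d \in I(c)).
   etyp d c : T  is the type [(d,c)] of the edge (d,c) (meaningful only on edges);
   ctyp c : U   is the type (class) of cell c. *)

Definition no_loops n (E : rel 'I_n) : Prop := forall c, ~~ E c c.

Definition types_compatible n (T U : Type) (E : rel 'I_n)
  (etyp : 'I_n -> 'I_n -> T) (ctyp : 'I_n -> U) : Prop :=
  forall d c d' c', E d c -> E d' c' -> etyp d c = etyp d' c' ->
    ctyp d = ctyp d' /\ ctyp c = ctyp c'.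

Definition input_equiv n (T : Type) (E : rel 'I_n) (etyp : 'I_n -> 'I_n -> T)
  (c c' : 'I_n) : Prop :=
  exists g : 'I_n -> 'I_n,
    [/\ (forall d1 d2, E d1 c -> E d2 c -> g d1 = g d2 -> d1 = d2),
        (forall d, E d c -> E (g d) c' /\ etyp d c = etyp (g d) c') &
        (forall d', E d' c' -> exists2 d, E d c & g d = d')].

Definition homogeneous n (T : Type) (E : rel 'I_n) (etyp : 'I_n -> 'I_n -> T) :=
  forall c c', input_equiv E etyp c c'.

Definition bidirected n (T : Type) (E : rel 'I_n) (etyp : 'I_n -> 'I_n -> T) :=
  forall i j, (E i j = E j i) /\ (E i j -> etyp i j = etyp j i).

Definition connected_net n (E : rel 'I_n) :=
  forall c d, connect (fun a b => E a b || E b a) c d.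

Definition netfield (R : realType) n (T : Type) (E : rel 'I_n)
  (etyp : 'I_n -> 'I_n -> T) (phi : T -> R -> R) (x : 'I_n -> R) : 'I_n -> R :=
  fun c => \sum_(d | E d c) phi (etyp c d) (x d - x c).

Definition edist (R : realType) n (x y : 'I_n -> R) : R :=
  Num.sqrt (\sum_i (x i - y i) ^+ 2).

Definition Delta (R : realType) n : set ('I_n -> R) :=
  [set x | forall i j, x i = x j].

Definition dist_Delta (R : realType) n (x : 'I_n -> R) : R :=
  inf [set edist x y | y in @Delta R n].

Definition admissible_radius (R : realType) n (E : rel 'I_n) (eps r : R) : Prop :=
  forall x : 'I_n -> R, dist_Delta x < r ->
    forall d c, E d c -> `|x d - x c| < eps.

(* Omega: the largest admissible open hypercylinder around Delta
   (the union of all admissible ones). *)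
Definition Omega (R : realType) n (E : rel 'I_n) (eps : R) : set ('I_n -> R) :=
  [set x | exists r : R, admissible_radius E eps r /\ dist_Delta x < r].

Definition is_solution (R : realType) n (F : ('I_n -> R) -> 'I_n -> R)
  (x : R -> 'I_n -> R) : Prop :=
  (forall c, {within [set t : R | 0 <= t], continuous (fun t => x t c)}) /\
  (forall t : R, 0 < t -> forall c, is_derive t 1 (fun s => x s c) (F (x t) c)).

Definition asymp_stable_Delta_on (R : realType) n (F : ('I_n -> R) -> 'I_n -> R)
  (A : set ('I_n -> R)) : Prop :=
  (forall e : R, 0 < e -> exists2 delta : R, 0 < delta &
     forall x, is_solution F x -> dist_Delta (x 0) < delta ->
       forall t, 0 <= t -> dist_Delta (x t) < e) /\
  (forall x, is_solution F x -> A (x 0) ->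
     (fun t => dist_Delta (x t)) @ +oo --> (0 : R)).

(* Main.v *)
Require Import Defs.
From HB Require Import structures.
From mathcomp Require Import all_boot all_order all_algebra.
From mathcomp Require Import all_classical all_reals all_analysis.
From mathcomp Require Import ring lra.
Import Order.TTheory GRing.Theory Num.Theory.
Import numFieldNormedType.Exports.
Local Open Scope classical_set_scope.
Local Open Scope ring_scope.
Set Implicit Arguments. Unset Strict Implicit. Unset Printing Implicit Defensive.

Definition meanv (R : realType) n (y : 'I_n -> R) : R := (\sum_i y i) / n%:R.
Definition Vf (R : realType) n (y : 'I_n -> R) : R := \sum_i (y i - meanv y) ^+ 2.

Lemma sum_sub_mean (R : realType) n (y : 'I_n -> R) : \sum_i (y i - meanv y) = 0.
Proof.
rewrite sumrB sumr_const card_ord /meanv.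
case: n y => [|n] y; first by rewrite big_ord0 mulr0n subr0.
by rewrite -[(_ / _) *+ _]mulr_natr divfK ?subrr // pnatr_eq0.
Qed.

Lemma Vf_decomp (R : realType) n (y : 'I_n -> R) k :
  \sum_i (y i - k) ^+ 2 = Vf y + n%:R * (meanv y - k) ^+ 2.
Proof.
have -> : \sum_i (y i - k) ^+ 2 =
   \sum_i ((y i - meanv y) ^+ 2 + (2 * (meanv y - k)) * (y i - meanv y)
           + (meanv y - k) ^+ 2).
  by apply: eq_bigr => i _; ring.
rewrite !big_split /= -mulr_sumr sum_sub_mean mulr0 addr0 sumr_const card_ord.
by rewrite mulr_natl.
Qed.

Lemma Vf_ge0 (R : realType) n (y : 'I_n -> R) : 0 <= Vf y.
Proof. by apply: sumr_ge0 => i _; rewrite sqr_ge0. Qed.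

Lemma dist_DeltaE (R : realType) n (y : 'I_n -> R) :
  dist_Delta y = Num.sqrt (Vf y).
Proof.
rewrite /dist_Delta.
set A := [set _ | _ in _].
have lb : lbound A (Num.sqrt (Vf y)).
  move=> _ [z Dz <-]; rewrite /Defs.edist.
  case: n {A} y z Dz => [|n] y z Dz.
    by rewrite /Vf big_ord0 sqrtr0 sqrtr_ge0.
  rewrite /Defs.edist. 
  have -> : \sum_i (y i - z i) ^+ 2 = \sum_i (y i - z ord0) ^+ 2.
    by apply: eq_bigr => i _; rewrite (Dz i ord0).
  rewrite Vf_decomp ler_sqrt; last by rewrite addr_ge0 ?Vf_ge0 // mulr_ge0 // sqr_ge0.
  by rewrite lerDl mulr_ge0 // sqr_ge0.
have inA : A (Num.sqrt (Vf y)).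
  exists (fun _ => meanv y); first by [].
  by rewrite /Defs.edist /Vf.
apply/eqP; rewrite eq_le; apply/andP; split.
  by apply: ge_inf => //; exists (Num.sqrt (Vf y)).
by apply: lb_le_inf => //; exists (Num.sqrt (Vf y)).
Qed.
Lemma antisym_sum (R : realType) n (E : rel 'I_n) (G : 'I_n -> 'I_n -> R) :
  (forall i j, E i j = E j i) -> (forall d c, E d c -> G d c = - G c d) ->
  \sum_c \sum_(d | E d c) G c d = 0.
Proof.
move=> ES GA.
set X := \sum_c _.
suff : X = - X by lra.
rewrite {1}/X.
under eq_bigr do rewrite big_mkcond.
rewrite exchange_big /= /X -sumrN. apply: (@eq_bigr _ _ _ (ordinal n)) => c _.
rewrite [in RHS]big_mkcond -sumrN; apply: eq_bigr => d _ /=.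
rewrite ES; case: ifP => Edc; last by rewrite oppr0.
by rewrite GA.
Qed.

Definition Qf (R : realType) n T (E : rel 'I_n) (etyp : 'I_n -> 'I_n -> T)
  (phi : T -> R -> R) (y : 'I_n -> R) : R :=
  \sum_c \sum_(d | E d c) (y d - y c) * phi (etyp c d) (y d - y c).

Lemma netfield_sum0 (R : realType) n T (E : rel 'I_n) (etyp : 'I_n -> 'I_n -> T)
  (phi : T -> R -> R) (y : 'I_n -> R) :
  bidirected E etyp ->
  (forall d c, E d c -> forall a, phi (etyp d c) (- a) = - phi (etyp d c) a) ->
  \sum_c netfield E etyp phi y c = 0.
Proof.
move=> bd odd; rewrite /netfield; apply: antisym_sum.
  by move=> i j; case: (bd i j).
move=> d c Edc; have [_ /(_ Edc) ->] := bd d c.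
have Ecd : E c d by have [<-] := bd d c.
by rewrite -odd // opprB.
Qed.

Lemma netfield_Q (R : realType) n T (E : rel 'I_n) (etyp : 'I_n -> 'I_n -> T)
  (phi : T -> R -> R) (y : 'I_n -> R) :
  bidirected E etyp ->
  (forall d c, E d c -> forall a, phi (etyp d c) (- a) = - phi (etyp d c) a) ->
  2 * \sum_c y c * netfield E etyp phi y c = - Qf E etyp phi y.
Proof.
move=> bd odd.
suff : \sum_c \sum_(d | E d c) (y c + y d) * phi (etyp c d) (y d - y c) = 0.
  move=> H.
  have E1 : 2 * \sum_c y c * netfield E etyp phi y c + Qf E etyp phi y =
    \sum_c \sum_(d | E d c) (y c + y d) * phi (etyp c d) (y d - y c).
    rewrite mulr_sumr /Qf -big_split; apply: eq_bigr => c _ /=.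
    rewrite /netfield mulr_sumr mulr_sumr -big_split; apply: eq_bigr => d _ /=.
    ring.
  rewrite H in E1; lra.
apply: antisym_sum; first by move=> i j; case: (bd i j).
move=> d c Edc; have [_ /(_ Edc) ->] := bd d c.
have Ecd : E c d by have [<-] := bd d c.
by rewrite -[y c - y d]opprB odd // mulrN addrC.
Qed.

Lemma Vf_alt (R : realType) n (y : 'I_n -> R) :
  Vf y = \sum_i y i ^+ 2 - (\sum_i y i) ^+ 2 / n%:R.
Proof.
have := Vf_decomp y 0; under eq_bigr do rewrite subr0.
move=> ->; rewrite subr0 /meanv.
case: n y => [|n] y; first by rewrite !big_ord0 !mul0r expr0n /= mul0r subr0 addr0.
have nz : n.+1%:R != 0 :> R by rewrite pnatr_eq0.
by field.
Qed.

Lemma V_deriv (R : realType) n T (E : rel 'I_n) (etyp : 'I_n -> 'I_n -> T)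
  (phi : T -> R -> R) (x : R -> 'I_n -> R) (t : R) :
  bidirected E etyp ->
  (forall d c, E d c -> forall a, phi (etyp d c) (- a) = - phi (etyp d c) a) ->
  (forall c, is_derive t 1 (fun s => x s c) (netfield E etyp phi (x t) c)) ->
  is_derive t 1 (fun s => Vf (x s)) (- Qf E etyp phi (x t)).
Proof.
move=> bd odd dx.
set u := fun i s => x s i.
set F := netfield E etyp phi (x t).
pose G := \sum_i (u i * u i) - (n%:R^-1) \*: ((\sum_i u i) * (\sum_i u i)).
have -> : (fun s => Vf (x s)) = G.
  apply/funext => s; rewrite Vf_alt /G /=.
  rewrite !fctE !fct_sumE /= /u.
  under [in RHS]eq_bigr do rewrite mulrfctE.
  by rewrite /GRing.scale /= -expr2 mulrC; under eq_bigr do rewrite expr2.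
apply: is_derive_eq.
rewrite (netfield_sum0 _ bd odd) !scaler0 addr0 scaler0 subr0.
rewrite -(netfield_Q _ bd odd) mulr_sumr; apply: eq_bigr => i _.
by rewrite /u /GRing.scale /=; ring.
Qed.

Lemma path_bound (R : realType) n (e : rel 'I_n) (y : 'I_n -> R) (b : R) :
  (forall d c, e d c -> `|y d - y c| <= b) ->
  forall p x, path e x p -> `|y x - y (last x p)| <= (size p)%:R * b.
Proof.
move=> H; elim=> [|z p IH] x /=; first by rewrite subrr normr0 mul0r.
move=> /andP[exz pz].
rewrite -(subrKA (y z)) (le_trans (ler_normD _ _)) // -addn1 natrD mulrDl mul1r addrC.
by rewrite lerD ?IH ?H.
Qed.

Lemma conn_bound (R : realType) n (E : rel 'I_n) (y : 'I_n -> R) (b : R) :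
  connected_net E -> 0 <= b ->
  (forall d c, E d c -> `|y d - y c| <= b) ->
  forall i j, `|y i - y j| <= n%:R * b.
Proof.
move=> cn b0 H i j.
have /connectP [p pp ->] := cn i j.
case: (shortenP pp) => p' pp' up' _.
have H' : forall d c, (fun a b => E a b || E b a) d c -> `|y d - y c| <= b.
  move=> d c /orP[/H //|/H]; by rewrite -normrN opprB.
apply: le_trans (path_bound H' pp') _.
apply: ler_wpM2r => //; rewrite ler_nat.
have := max_card (mem (i :: p')); rewrite card_ord (card_uniqP up') /=.
by move/ltnW.
Qed.
Lemma term_ge0 (R : realType) n T (E : rel 'I_n) (etyp : 'I_n -> 'I_n -> T)
  (phi : T -> R -> R) (eps : R) :
  bidirected E etyp ->
  (forall d c, E d c -> forall a, 0 < `|a| < eps -> 0 < a * phi (etyp d c) a) ->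
  forall (y : 'I_n -> R) d c, E d c -> `|y d - y c| < eps ->
  0 <= (y d - y c) * phi (etyp c d) (y d - y c).
Proof.
move=> bd pos y d c Edc lt.
have [_ /(_ Edc) <-] := bd d c.
have [->|nz] := eqVneq (y d - y c) 0; first by rewrite mul0r.
by apply: ltW; apply: pos => //; rewrite normr_gt0 nz.
Qed.

Lemma Q_ge_term (R : realType) n T (E : rel 'I_n) (etyp : 'I_n -> 'I_n -> T)
  (phi : T -> R -> R) (eps : R) :
  bidirected E etyp ->
  (forall d c, E d c -> forall a, 0 < `|a| < eps -> 0 < a * phi (etyp d c) a) ->
  forall (y : 'I_n -> R), (forall d c, E d c -> `|y d - y c| < eps) ->
  forall d0 c0, E d0 c0 ->
  (y d0 - y c0) * phi (etyp c0 d0) (y d0 - y c0) <= Qf E etyp phi y.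
Proof.
move=> bd pos y H d0 c0 E0.
rewrite /Qf (bigD1 c0) //= (bigD1 d0) //= -addrA lerDl.
apply: addr_ge0; first by apply: sumr_ge0 => d /andP[Ed _]; apply: (term_ge0 bd pos) => //; by apply: H.
apply: sumr_ge0 => c _; apply: sumr_ge0 => d Ed; apply: (term_ge0 bd pos) => //; by apply: H.
Qed.

Lemma Q_ge0 (R : realType) n T (E : rel 'I_n) (etyp : 'I_n -> 'I_n -> T)
  (phi : T -> R -> R) (eps : R) :
  bidirected E etyp ->
  (forall d c, E d c -> forall a, 0 < `|a| < eps -> 0 < a * phi (etyp d c) a) ->
  forall (y : 'I_n -> R), (forall d c, E d c -> `|y d - y c| < eps) ->
  0 <= Qf E etyp phi y.
Proof.
move=> bd pos y H.
apply: sumr_ge0 => c _; apply: sumr_ge0 => d Ed; apply: (term_ge0 bd pos) => //; by apply: H.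
Qed.

Lemma Q_lower (R : realType) n T (E : rel 'I_n) (etyp : 'I_n -> 'I_n -> T)
  (phi : T -> R -> R) (eps beta rho : R) :
  bidirected E etyp ->
  (forall d c, E d c -> forall a, phi (etyp d c) (- a) = - phi (etyp d c) a) ->
  (forall d c, E d c -> continuous (phi (etyp d c))) ->
  (forall d c, E d c -> forall a, 0 < `|a| < eps -> 0 < a * phi (etyp d c) a) ->
  0 < beta -> rho < eps ->
  exists2 k : R, 0 < k & forall y : 'I_n -> R,
    (forall d c, E d c -> `|y d - y c| <= rho) ->
    forall d c, E d c -> beta <= `|y d - y c| -> k <= Qf E etyp phi y.
Proof.
move=> bd odd cont pos b0 re.
have edge : forall d c, exists k : R, 0 < k /\ (E d c -> forall a, beta <= `|a| <= rho ->
    k <= a * phi (etyp c d) a).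
  move=> d c.
  case Edc : (E d c); last by exists 1.
  have Ecd : E c d by have [<-] := bd d c.
  have [br|rb] := leP beta rho; last first.
    exists 1; split => // _ a /andP[ba ar].
    by have := le_trans ba ar; rewrite leNgt rb.
  have cg : {within `[beta, rho], continuous (fun a => a * phi (etyp c d) a)}.
    apply: continuous_subspaceT => a.
    apply: continuousM; first exact: cvg_id.
    exact: cont.
  have [a0 a0in minf] := EVT_min br cg.
  move: (a0in); rewrite in_itv /= => /andP[ba0 a0r].
  exists (a0 * phi (etyp c d) a0); split.
    apply: pos => //; rewrite (lt_le_trans b0 (le_trans ba0 (ler_norm _))) /=.
    by rewrite ger0_norm ?(le_trans (ltW b0) ba0) // (le_lt_trans a0r re).
  move=> _ a /andP[ba ar].
  have [a0' | a0'] := leP 0 a.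
    by apply: minf; rewrite in_itv /= -(ger0_norm a0') ba ar.
  have -> : a * phi (etyp c d) a = (- a) * phi (etyp c d) (- a).
    by rewrite odd // mulrNN.
  by apply: minf; rewrite in_itv /= -(ltr0_norm a0') ba ar.
have [f fP] : exists f : 'I_n -> 'I_n -> R, forall d c, 0 < f d c /\ (E d c ->
    forall a, beta <= `|a| <= rho -> f d c <= a * phi (etyp c d) a).
  have : forall d, exists g : 'I_n -> R, forall c, 0 < g c /\ (E d c ->
    forall a, beta <= `|a| <= rho -> g c <= a * phi (etyp c d) a).
    by move=> d; have [g gP] := choice (edge d); exists g.
  by case/choice => g gP; exists g.
set S := \sum_d \sum_c (f d c)^-1.
have S0 : 0 <= S.
  by apply: sumr_ge0 => d _; apply: sumr_ge0 => c _; rewrite invr_ge0 ltW //; case: (fP d c).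
exists (1 + S)^-1; first by rewrite invr_gt0; lra.
move=> y H d c Edc bdc.
have [fpos fle] := fP d c.
have : f d c <= (y d - y c) * phi (etyp c d) (y d - y c).
  by apply: fle => //; rewrite bdc H.
move=> h; apply: le_trans (le_trans h _).
  rewrite -[f d c]invrK lef_pV2 ?posrE ?invr_gt0 //; last lra.
  have : (f d c)^-1 <= S.
    rewrite /S (bigD1 d) //= (bigD1 c) //= -addrA lerDl.
    apply: addr_ge0; first by apply: sumr_ge0 => i _; rewrite invr_ge0 ltW //; case: (fP d i).
    by apply: sumr_ge0 => i _; apply: sumr_ge0 => j _; rewrite invr_ge0 ltW //; case: (fP i j).
  lra.
apply: (Q_ge_term bd pos) => // i j Eij.
by apply: le_lt_trans (H i j Eij) re.
Qed.


Lemma sum_cont (T : topologicalType) (R : realType) n (g : 'I_n -> T -> R) t :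
  (forall i, {for t, continuous (g i)}) ->
  {for t, continuous (fun s => \sum_i g i s)}.
Proof.
move=> H.
have -> : (fun s => \sum_i g i s) = \sum_i g i by apply/funext => s; rewrite fct_sumE.
elim/big_ind: _ => //.
- exact: cvg_cst.
- by move=> f h cf ch; apply: continuousD.
Qed.

Lemma Vf_cont_gen (T : topologicalType) (R : realType) n (u : T -> 'I_n -> R) t :
  (forall i, {for t, continuous (fun s => u s i)}) ->
  {for t, continuous (fun s => Vf (u s))}.
Proof.
move=> H; rewrite /Vf; apply: sum_cont => i.
have cm : {for t, continuous (fun s => meanv (u s))}.
  rewrite /meanv; apply: (@continuousM _ _ (fun s => \sum_i u s i) (fun=> n%:R^-1)).
    exact: sum_cont.
  exact: cvg_cst.
have cd : {for t, continuous (fun s => u s i - meanv (u s))}.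
  exact: (@continuousB _ _ _ (fun s => u s i) (fun s => meanv (u s))).
under [X in {for t, continuous X}]eq_fun do rewrite expr2.
exact: (@continuousM _ _ (fun s => u s i - meanv (u s)) (fun s => u s i - meanv (u s))).
Qed.

Lemma V_cont (R : realType) n (A : set R) (x : R -> 'I_n -> R) :
  (forall c, {within A, continuous (fun t => x t c)}) ->
  {within A, continuous (fun t => Vf (x t))}.
Proof.
move=> H t.
exact: (@Vf_cont_gen (subspace A) R n x t (fun i => H i t)).
Qed.

Lemma within_epsdelta (R : realType) (A : set R) (g : R -> R) :
  {within A, continuous g} -> forall s, A s -> forall e : R, 0 < e ->
  exists2 d : R, 0 < d & forall u, A u -> `|s - u| < d -> `|g s - g u| < e.
Proof.
move=> /subspace_continuousP cg s As e e0.
have := cg s As; move/cvgrPdist_lt => /(_ e e0).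
rewrite near_withinE => /nbhs_ballP[d /= d0 H].
exists d => // u Au su; apply: H => //.
Qed.

Lemma nincr (R : realType) (f df : R -> R) (a b : R) : a <= b ->
  (forall s, a < s < b -> is_derive s 1 f (df s)) ->
  (forall s, a < s < b -> df s <= 0) ->
  {within `[a, b], continuous f} -> f b <= f a.
Proof.
rewrite le_eqVlt => /orP[/eqP -> //|ab] hd hn hc.
have hd2 : forall s, s \in `]a, b[ -> is_derive s 1 f (df s).
  by move=> s; rewrite in_itv /=; apply: hd.
have [c cab eq] := MVT ab hd2 hc.
have : df c * (b - a) <= 0.
  by rewrite mulr_le0_ge0 ?hn ?subr_ge0 ?ltW //; move: cab; rewrite in_itv.
lra.
Qed.

Lemma sub_nonneg (R : realType) (a b : R) : 0 <= a ->
  [set` `[a, b]] `<=` [set t : R | 0 <= t].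
Proof. by move=> a0 s /=; rewrite in_itv /= => /andP[h _]; apply: le_trans h. Qed.

Lemma first_exit (R : realType) (g dg : R -> R) (c : R) :
  {within [set t : R | 0 <= t], continuous g} ->
  (forall t : R, 0 < t -> is_derive t 1 g (dg t)) ->
  (forall t : R, 0 < t -> g t < c -> dg t <= 0) ->
  g 0 < c ->
  forall t : R, 0 <= t -> g t < c.
Proof.
move=> hc hd hn g0 t t0.
rewrite ltNge; apply/negP => ct.
pose B := [set s : R | 0 <= s /\ c <= g s].
have lbB : lbound B 0 by move=> s [].
have neB : B !=set0 by exists t.
have hlB : has_lbound B by exists 0.
set s := inf B.
have s0 : 0 <= s by apply: lb_le_inf.
have hlt : forall u, 0 <= u -> u < s -> g u < c.
  move=> u u0 us; rewrite ltNge; apply/negP => cu.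
  have : s <= u by apply: ge_inf => //.
  by rewrite leNgt us.
have gs : g s <= g 0.
  apply: (@nincr _ g dg 0 s s0).
  - by move=> u /andP[u0 us]; apply: hd.
  - by move=> u /andP[u0 us]; apply: hn => //; apply: hlt => //; apply: ltW.
  - apply: (continuous_subspaceW _ hc); exact: sub_nonneg.
have cgs : 0 < c - g s by rewrite subr_gt0; apply: le_lt_trans g0.
have [d d0 hd'] := within_epsdelta hc (s0 : [set t : R | 0 <= t] s) cgs.
have [b [b0 cb] bs] := inf_adherent d0 (conj neB hlB).
have sb : s <= b by apply: ge_inf.
have sbd : `|s - b| < d by rewrite distrC ger0_norm ?subr_ge0 //; lra.
have := hd' b b0 sbd.
rewrite distrC => /(le_lt_trans (ler_norm _)) => h; lra.
Qed.

Lemma mono_traj (R : realType) (g dg : R -> R) (c : R) :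
  {within [set t : R | 0 <= t], continuous g} ->
  (forall t : R, 0 < t -> is_derive t 1 g (dg t)) ->
  (forall t : R, 0 < t -> g t < c -> dg t <= 0) ->
  g 0 < c ->
  forall s t : R, 0 <= s -> s <= t -> g t <= g s.
Proof.
move=> hc hd hn g0 s t s0 st.
have lt := first_exit hc hd hn g0.
apply: (@nincr _ g dg s t st).
- by move=> u /andP[su ut]; apply: hd; apply: le_lt_trans su.
- move=> u /andP[su ut]; have u0 : 0 < u by apply: le_lt_trans su.
  by apply: hn => //; apply: lt; apply: ltW.
- apply: (continuous_subspaceW _ hc); exact: sub_nonneg.
Qed.

Lemma sqrt_lt_sq (R : realType) (a r : R) : 0 <= a -> Num.sqrt a < r -> a < r ^+ 2.
Proof.
move=> a0 h; have s0 := sqrtr_ge0 a; have sq := sqr_sqrtr a0.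
rewrite -sq; nra.
Qed.

Lemma sq_lt_sqrt (R : realType) (a r : R) : 0 <= a -> 0 < r -> a < r ^+ 2 -> Num.sqrt a < r.
Proof.
move=> a0 r0 h; have s0 := sqrtr_ge0 a; have sq := sqr_sqrtr a0.
rewrite -sq in h; nra.
Qed.

Lemma dev_bound (R : realType) n (y : 'I_n -> R) i : `|y i - meanv y| <= Num.sqrt (Vf y).
Proof.
rewrite -sqrtr_sqr ler_sqrt ?Vf_ge0 // /Vf (bigD1 i) //= lerDl.
by apply: sumr_ge0 => j _; rewrite sqr_ge0.
Qed.

Lemma diff_bound (R : realType) n (y : 'I_n -> R) i j :
  `|y i - y j| <= 2 * Num.sqrt (Vf y).
Proof.
have -> : y i - y j = (y i - meanv y) - (y j - meanv y) by ring.
apply: le_trans (ler_normB _ _) _.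
have := dev_bound y i; have := dev_bound y j; lra.
Qed.

Lemma adm_half (R : realType) n (E : rel 'I_n) (eps : R) :
  0 < eps -> admissible_radius E eps (eps / 2).
Proof.
move=> e0 y; rewrite dist_DeltaE => h d c _.
have := diff_bound y d c; lra.
Qed.

Lemma unif_bound (R : realType) n (E : rel 'I_n) (eps r V0 : R) :
  admissible_radius E eps r -> 0 <= V0 -> Num.sqrt V0 < r ->
  forall y : 'I_n -> R, Vf y <= V0 -> forall d c, E d c ->
  `|y d - y c| <= eps * (r + Num.sqrt V0) / (2 * r).
Proof.
move=> adm V00 sr y Vy d c Edc.
set s := Num.sqrt V0.
have s0 : 0 <= s := sqrtr_ge0 V0.
have sr2 : s < r by [].
have r0 : 0 < r by apply: le_lt_trans sr.
set l := 2 * r / (r + s).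
have l0 : 0 < l by rewrite /l divr_gt0 ?mulr_gt0 //; lra.
have lls : l * s < r.
  rewrite /l mulrAC ltr_pdivrMr; last lra.
  have : 0 < r * (r - s) by apply: mulr_gt0; lra.
  nra.
pose y' := fun i => meanv y + l * (y i - meanv y).
have Vy' : Vf y' <= l ^+ 2 * Vf y.
  have := Vf_decomp y' (meanv y).
  have -> : \sum_i (y' i - meanv y) ^+ 2 = l ^+ 2 * Vf y.
    rewrite /Vf mulr_sumr; apply: eq_bigr => i _; rewrite /y'; ring.
  move=> ->; rewrite lerDl mulr_ge0 ?ler0n ?sqr_ge0 //.
have dy' : dist_Delta y' < r.
  rewrite dist_DeltaE; apply: le_lt_trans lls.
  rewrite /s -(ger0_norm (ltW l0)) -sqrtr_sqr -sqrtrM ?sqr_ge0 //.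
  rewrite ler_sqrt; last by rewrite mulr_ge0 ?sqr_ge0 ?Vf_ge0.
  apply: le_trans Vy' _.
  by rewrite ler_wpM2l ?sqr_ge0 //.
have := adm y' dy' d c Edc.
have -> : y' d - y' c = l * (y d - y c) by rewrite /y'; ring.
rewrite normrM (gtr0_norm l0) => h.
rewrite ler_pdivlMr ?mulr_gt0 //.
have -> : 2 * r = l * (r + s) by rewrite /l mulrC divfK //; lra.
rewrite mulrA ler_pM2r; last lra.
by rewrite mulrC; apply: ltW.
Qed.

Lemma big_edge (R : realType) n (E : rel 'I_n) (e : R) :
  connected_net E -> 0 < e -> forall y : 'I_n -> R, e ^+ 2 <= Vf y ->
  exists d, exists c, E d c /\ e / (n%:R ^+ 2 + 1) <= `|y d - y c|.
Proof.
move=> cn e0 y hV.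
case: (pselect (exists d, exists c, E d c /\ e / (n%:R ^+ 2 + 1) <= `|y d - y c|)) => // nH.
exfalso.
case: n E cn y hV nH => [|n] E cn y hV nH.
  by move: hV; rewrite /Vf big_ord0; nra.
have Nz : n.+1%:R != 0 :> R by rewrite pnatr_eq0.
have Np : 0 < n.+1%:R :> R by rewrite ltr0n.
move: nH Nz Np; set N : R := n.+1%:R => nH Nz Np.
set b := e / (N ^+ 2 + 1).
have D0 : 0 < N ^+ 2 + 1 by nra.
have b0 : 0 < b by rewrite /b divr_gt0.
have be : e = b * (N ^+ 2 + 1) by rewrite /b divfK //; lra.
have H : forall d c, E d c -> `|y d - y c| <= b.
  move=> d c Edc; rewrite leNgt; apply/negP => h; apply: nH; exists d, c.
  by split => //; apply: ltW.
have cb := conn_bound cn (ltW b0) H.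
have dev : forall i, `|y i - meanv y| <= N * b.
  move=> i.
  have -> : y i - meanv y = (\sum_j (y i - y j)) / N.
    rewrite sumrB sumr_const card_ord /meanv -/N -mulr_natr -/N; field.
    by [].
  rewrite normrM normfV (gtr0_norm Np) ler_pdivrMr //.
  apply: le_trans (ler_norm_sum _ _ _) _.
  have hs : \sum_j `|y i - y j| <= \sum_(j : 'I_n.+1) N * b.
    by apply: ler_sum => j _; apply: cb.
  apply: le_trans hs _.
  by rewrite sumr_const card_ord -/N mulr_natr -/N mulrC.
have : Vf y <= N * (N * b) ^+ 2.
  have hi : forall i, (y i - meanv y) ^+ 2 <= (N * b) ^+ 2.
    by move=> i; have := dev i; rewrite ler_norml => /andP[h1 h2]; nra.
  have hs : Vf y <= \sum_(i : 'I_n.+1) (N * b) ^+ 2.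
    by apply: ler_sum => i _; apply: hi.
  apply: le_trans hs _.
  by rewrite sumr_const card_ord -mulr_natl.
have hN : N ^+ 3 < (N ^+ 2 + 1) ^+ 2 by nra.
have : N * (N * b) ^+ 2 < e ^+ 2.
  rewrite be; have bb : 0 < b ^+ 2 by rewrite exprn_gt0.
  have -> : N * (N * b) ^+ 2 = N ^+ 3 * b ^+ 2 by ring.
  have -> : (b * (N ^+ 2 + 1)) ^+ 2 = (N ^+ 2 + 1) ^+ 2 * b ^+ 2 by ring.
  by rewrite ltr_pM2r.
lra.
Qed.

Lemma deriv_lin (R : realType) (k t : R) : is_derive t 1 (fun s : R => k * s) k.
Proof.
have -> : (fun s : R => k * s) = k \*: id by apply/funext => s.
apply: is_derive_eq.
exact: mulr1.
Qed.

Lemma traj_mono (R : realType) n T (E : rel 'I_n) (etyp : 'I_n -> 'I_n -> T)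
  (phi : T -> R -> R) (eps r : R) (x : R -> 'I_n -> R) :
  bidirected E etyp ->
  (forall d c, E d c -> forall a, phi (etyp d c) (- a) = - phi (etyp d c) a) ->
  (forall d c, E d c -> forall a, 0 < `|a| < eps -> 0 < a * phi (etyp d c) a) ->
  is_solution (netfield E etyp phi) x -> admissible_radius E eps r ->
  dist_Delta (x 0) < r ->
  forall s t : R, 0 <= s -> s <= t -> Vf (x t) <= Vf (x s).
Proof.
move=> bd odd pos [hc hd] adm d0.
have r0 : 0 < r by apply: le_lt_trans d0; rewrite dist_DeltaE sqrtr_ge0.
apply: (@mono_traj _ (fun t => Vf (x t)) (fun t => - Qf E etyp phi (x t)) (r ^+ 2)).
- exact: V_cont.
- by move=> t t0; apply: V_deriv => // c; apply: hd.
- move=> t t0 lt; rewrite oppr_le0; apply: (Q_ge0 bd pos) => d c Edc.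
  apply: adm => //; rewrite dist_DeltaE; apply: sq_lt_sqrt => //; exact: Vf_ge0.
- by apply: sqrt_lt_sq; [exact: Vf_ge0 | rewrite -dist_DeltaE].
Qed.

Unset Implicit Arguments.
Theorem theorem5p1 (R : realType) (n : nat) (T U : Type)
  (E : rel 'I_n) (etyp : 'I_n -> 'I_n -> T) (ctyp : 'I_n -> U)
  (phi : T -> R -> R) (eps : R) :
  no_loops E ->
  types_compatible E etyp ctyp ->
  connected_net E ->
  homogeneous E etyp ->
  bidirected E etyp ->
  (forall d c, E d c ->
     [/\ (forall a, phi (etyp d c) (- a) = - phi (etyp d c) a),
         (forall a, derivable (phi (etyp d c)) a 1) &
         continuous (derive1 (phi (etyp d c)))]) ->
  0 < eps ->
  (forall d c, E d c -> forall a, 0 < `|a| < eps -> 0 < a * phi (etyp d c) a) ->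
  (forall x, Delta x -> netfield E etyp phi x = (fun _ => 0)) /\
  asymp_stable_Delta_on (netfield E etyp phi) (Omega E eps).
Proof.
move=> nl tc cn hom bd hphi e0 pos.
have odd : forall d c, E d c -> forall a, phi (etyp d c) (- a) = - phi (etyp d c) a.
  by move=> d c Edc; case: (hphi d c Edc).
have cont : forall d c, E d c -> continuous (phi (etyp d c)).
  move=> d c Edc a; case: (hphi d c Edc) => _ der _.
  by apply: differentiable_continuous; apply/derivable1_diffP; exact: der.
split.
  move=> y Dy; apply/funext => c; rewrite /netfield; apply: big1 => d Edc.
  rewrite (Dy d c) subrr.
  have Ecd : E c d by have [<-] := bd d c.
  have := odd c d Ecd 0; rewrite oppr0; lra.
split.
  move=> e ep; exists (Num.min e (eps / 2)).
    by rewrite lt_min ep /=; lra.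
  move=> x sol hx t t0.
  have adm := adm_half (E := E) e0.
  have hx' : dist_Delta (x 0) < eps / 2.
    by apply: lt_le_trans hx _; rewrite ge_min lexx orbT.
  have := traj_mono bd odd pos sol adm hx' (lexx 0) t0.
  move=> hm; apply: (le_lt_trans _ (lt_le_trans hx _)).
    by rewrite !dist_DeltaE ler_sqrt ?Vf_ge0.
  by rewrite ge_min lexx.
move=> x sol [r [adm hr]].
have mono := traj_mono bd odd pos sol adm hr.
apply/cvgrPdist_lt => e ep.
case: (pselect (exists t0, 0 <= t0 /\ Vf (x t0) < e ^+ 2)).
  case=> t0 [t00 ht0].
  exists t0; split => [|t tt0]; first exact: num_real.
  rewrite sub0r normrN dist_DeltaE ger0_norm ?sqrtr_ge0 //.
  apply: sq_lt_sqrt => //; first exact: Vf_ge0.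
  by apply: le_lt_trans ht0; apply: mono => //; apply: ltW.
move=> nE; exfalso.
have hge : forall t, 0 <= t -> e ^+ 2 <= Vf (x t).
  by move=> t t0; rewrite leNgt; apply/negP => h; apply: nE; exists t.
set V0 := Vf (x 0).
have V00 : 0 <= V0 by exact: Vf_ge0.
have s0r : Num.sqrt V0 < r by rewrite -dist_DeltaE.
have r0 : 0 < r by apply: le_lt_trans s0r; rewrite sqrtr_ge0.
set s0 := Num.sqrt V0.
have s00 : 0 <= s0 by rewrite sqrtr_ge0.
have s0r2 : s0 < r by [].
set beta := e / (n%:R ^+ 2 + 1).
have beta0 : 0 < beta by rewrite /beta divr_gt0 //; apply: ltr_pwDr => //; rewrite sqr_ge0.
set rho := eps * (r + s0) / (2 * r).
have rhoe : rho < eps.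
  rewrite /rho ltr_pdivrMr ?mulr_gt0 //.
  have : 0 < eps * (r - s0) by apply: mulr_gt0 => //; lra.
  nra.
have [k k0 hk] := Q_lower bd odd cont pos beta0 rhoe.
have hQ : forall t, 0 < t -> k <= Qf E etyp phi (x t).
  move=> t t0.
  have [d [c [Edc bdc]]] := big_edge cn ep (hge t (ltW t0)).
  apply: (hk _ _ d c Edc bdc) => i j Eij.
  apply: (unif_bound adm V00 s0r) => //.
  by apply: mono => //; apply: ltW.
case: sol => hc hd.
set Tm := (V0 + 1) / k.
have Tm0 : 0 <= Tm by rewrite /Tm divr_ge0 //; lra.
have hder : forall t, 0 < t < Tm ->
    is_derive t 1 (fun t => Vf (x t) + k * t) (- Qf E etyp phi (x t) + k).
  move=> t /andP[t0 _].
  have h1 := V_deriv bd odd (hd t t0).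
  have h2 := deriv_lin k t.
  have -> : (fun t => Vf (x t) + k * t) = (fun t => Vf (x t)) + (fun s => k * s) by [].
  exact: (is_deriveD h1 h2).
have hneg : forall t, 0 < t < Tm -> - Qf E etyp phi (x t) + k <= 0.
  by move=> t /andP[t0 _]; have := hQ t t0; lra.
have hcont : {within `[0, Tm], continuous (fun t => Vf (x t) + k * t)}.
  apply: (continuous_subspaceW _ _); first exact: sub_nonneg.
  move=> t; apply: continuousD; first exact: (V_cont hc).
  apply: (continuous_subspaceT (A := [set t : R | 0 <= t]) (f := fun s : R => k * s)).
  by move=> u; apply: continuousM; [exact: cvg_cst | exact: cvg_id].
have := nincr Tm0 hder hneg hcont.
have -> : k * Tm = V0 + 1 by rewrite /Tm mulrC divfK //; lra.
rewrite mulr0 addr0 => h.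
have := Vf_ge0 (x Tm); rewrite -/V0 in h; lra.
Qed.
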